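(* Let $f:E\to\mathbb{R}$ be $L$-smooth (not necessarily convex) and suppose $f$ attains its minimum at a point $x_*$. Let Algorithm AGMsDR (either option) be run from $x^0$ producing $y^0,\dots,y^N$ and $x^0,\dots,x^{N+1}$, with $N\ge 1$. Then $$\min_{k=0,\dots,N}\|\nabla f(y^k)\|_*^2\le\frac{2L\,(f(x^0)-f(x_* ))}{N}.$$
   Context: $E$ is a finite-dimensional real vector space with a norm $\|\cdot\|$; $E^*$ is its dual, $\langle g,x\rangle$ denotes the value of $g\in E^*$ at $x\in E$, and $\|g\|_*=\max\{\langle g,x\rangle:\|x\|\le 1\}$. For $g\in E^*$, $g^{\#}$ denotes a (fixed) element $s\in E$ with $\|s\|\le 1$ and $\langle g,s\rangle=\|g\|_*$. A prox-function $d:E\to\mathbb{R}$ is continuously differentiable, convex, $1$-strongly convex with respect to $\|\cdot\|$ (i.e. $d(y)-d(x)-\langle\nabla d(x),y-x\rangle\ge\frac12\|y-x\|^2$ for all $x,y\in E$) and satisfies $\min_E d=0$; its Bregman divergence is $V(x,z)=d(x)-d(z)-\langle\nabla d(z),x-z\rangle$. A function $f:E\to\mathbb{R}$ is $L$-smooth ($L>0$) if it is continuously differentiable and $\|\nabla f(x)-\nabla f(y)\|_*\le L\|x-y\|$ for all $x,y\in E$. Algorithm AGMsDR (input $x^0\in E$, and $L$ for Option (a)): set $A_0=0$, $v^0=x^0$, $\psi_0(x)=V(x,x^0)$. For $k=0,1,2,\dots$: 1. Choose $\beta_k\in\arg\min_{\beta\in[0,1]} f(v^k+\beta(x^k-v^k))$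 (a global minimizer over the interval) and set $y^k=v^k+\beta_k(x^k-v^k)$. 2. Option (a): $x^{k+1}\in\arg\min_{x\in E}\{f(y^k)+\langle\nabla f(y^k),x-y^k\rangle+\frac L2\|x-y^k\|^2\}$, and $a_{k+1}>0$ solves $\frac{a_{k+1}^2}{A_k+a_{k+1}}=\frac1L$. Option (b): $h_{k+1}\in\arg\min_{h\ge0} f(y^k-h(\nabla f(y^k))^{\#})$, $x^{k+1}=y^k-h_{k+1}(\nabla f(y^k))^{\#}$, and $a_{k+1}$ is the largest solution of $f(y^k)-\frac{a_{k+1}^2}{2(A_k+a_{k+1})}\|\nabla f(y^k)\|_*^2=f(x^{k+1})$. 3. $A_{k+1}=A_k+a_{k+1}$; $\psi_{k+1}(x)=\psi_k(x)+a_{k+1}\{f(y^k)+\langle\nabla f(y^k),x-y^k\rangle\}$; $v^{k+1}=\arg\min_{x\in E}\psi_{k+1}(x)$. It is assumed that all the minima in the algorithm are attained, and that $\nabla f(y^k)\neq 0$ for all iterations considered (otherwise $y^k$ is a stationary point and the method stops). *)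

(* Defs.v *)
From mathcomp Require Import ssreflect ssrfun ssrbool eqtype ssrnat seq fintype bigop.
From Stdlib Require Import Reals.

Set Implicit Arguments.
Unset Strict Implicit.

Local Open Scope R_scope.

(* E = R^n; its dual E^* is identified with R^n through the pairing below. *)
Definition vec (n : nat) := 'I_n -> R.

Definition vzero (n : nat) : vec n := fun _ => 0.
Definition vadd {n} (x y : vec n) : vec n := fun i => x i + y i.
Definition vsub {n} (x y : vec n) : vec n := fun i => x i - y i.
Definition vscal {n} (c : R) (x : vec n) : vec n := fun i => c * x i.

Definition pairing {n} (g x : vec n) : R := \big[Rplus/0]_(i < n) (g i * x i).

Definition is_norm {n} (nrm : vec n -> R) : Prop :=
  (forall x, 0 <= nrm x) /\
  (forall x, nrm x = 0 <-> x = @vzero n) /\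
  (forall c x, nrm (vscal c x) = Rabs c * nrm x) /\
  (forall x y, nrm (vadd x y) <= nrm x + nrm y).

Definition is_dual_norm {n} (nrm dn : vec n -> R) : Prop :=
  forall g, (forall x, nrm x <= 1 -> pairing g x <= dn g) /\
            (exists x, nrm x <= 1 /\ pairing g x = dn g).

Definition is_sharp {n} (nrm dn : vec n -> R) (sh : vec n -> vec n) : Prop :=
  forall g, nrm (sh g) <= 1 /\ pairing g (sh g) = dn g.

Definition has_gradient {n} (nrm : vec n -> R) (f : vec n -> R) (G : vec n -> vec n) : Prop :=
  forall x eps, 0 < eps -> exists del, 0 < del /\
    forall h, nrm h < del -> Rabs (f (vadd x h) - f x - pairing (G x) h) <= eps * nrm h.

Definition grad_continuous {n} (nrm dn : vec n -> R) (G : vec n -> vec n) : Prop :=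
  forall x eps, 0 < eps -> exists del, 0 < del /\
    forall z, nrm (vsub z x) < del -> dn (vsub (G z) (G x)) < eps.

Definition L_smooth {n} (nrm dn : vec n -> R) (L : R) (f : vec n -> R) (G : vec n -> vec n) : Prop :=
  0 < L /\ has_gradient nrm f G /\ grad_continuous nrm dn G /\
  (forall x y, dn (vsub (G x) (G y)) <= L * nrm (vsub x y)).

Definition convex {n} (d : vec n -> R) : Prop :=
  forall x y t, 0 <= t <= 1 ->
    d (vadd (vscal t x) (vscal (1 - t) y)) <= t * d x + (1 - t) * d y.

Definition is_prox {n} (nrm dn : vec n -> R) (d : vec n -> R) (Gd : vec n -> vec n) : Prop :=
  has_gradient nrm d Gd /\ grad_continuous nrm dn Gd /\ convex d /\
  (forall x y, d y - d x - pairing (Gd x) (vsub y x) >= / 2 * (nrm (vsub y x)) ^ 2) /\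
  (forall x, 0 <= d x) /\ (exists x, d x = 0).

Definition bregman {n} (d : vec n -> R) (Gd : vec n -> vec n) (x z : vec n) : R :=
  d x - d z - pairing (Gd z) (vsub x z).

Fixpoint psi {n} (d : vec n -> R) (Gd : vec n -> vec n) (f : vec n -> R)
  (G : vec n -> vec n) (x0 : vec n) (a : nat -> R) (y : nat -> vec n) (k : nat) (z : vec n) : R :=
  match k with
  | O => bregman d Gd z x0
  | S j => psi d Gd f G x0 a y j z + a (S j) * (f (y j) + pairing (G (y j)) (vsub z (y j)))
  end.

Definition step_a {n} (nrm : vec n -> R) (L : R) (f : vec n -> R) (G : vec n -> vec n)
  (yk xk1 : vec n) (Ak ak1 : R) : Prop :=
  (forall z, f yk + pairing (G yk) (vsub xk1 yk) + L / 2 * (nrm (vsub xk1 yk)) ^ 2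
             <= f yk + pairing (G yk) (vsub z yk) + L / 2 * (nrm (vsub z yk)) ^ 2) /\
  0 < ak1 /\ ak1 ^ 2 / (Ak + ak1) = / L.

Definition step_b {n} (dn : vec n -> R) (sh : vec n -> vec n) (f : vec n -> R) (G : vec n -> vec n)
  (yk xk1 : vec n) (hk1 Ak ak1 : R) : Prop :=
  0 <= hk1 /\
  (forall t, 0 <= t -> f (vsub yk (vscal hk1 (sh (G yk)))) <= f (vsub yk (vscal t (sh (G yk))))) /\
  xk1 = vsub yk (vscal hk1 (sh (G yk))) /\
  Ak + ak1 <> 0 /\
  f yk - ak1 ^ 2 / (2 * (Ak + ak1)) * (dn (G yk)) ^ 2 = f xk1 /\
  (forall a', Ak + a' <> 0 ->
     f yk - a' ^ 2 / (2 * (Ak + a')) * (dn (G yk)) ^ 2 = f xk1 -> a' <= ak1).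

Definition AGMsDR_run {n} (nrm dn : vec n -> R) (sh : vec n -> vec n) (L : R)
  (f : vec n -> R) (G : vec n -> vec n) (d : vec n -> R) (Gd : vec n -> vec n)
  (opt : bool) (x0 : vec n) (x y v : nat -> vec n) (A a beta h : nat -> R) (N : nat) : Prop :=
  A 0%nat = 0 /\ x 0%nat = x0 /\ v 0%nat = x0 /\
  forall k : nat, (k <= N)%nat ->
    (0 <= beta k <= 1 /\
     (forall b, 0 <= b <= 1 ->
        f (vadd (v k) (vscal (beta k) (vsub (x k) (v k))))
        <= f (vadd (v k) (vscal b (vsub (x k) (v k))))) /\
     y k = vadd (v k) (vscal (beta k) (vsub (x k) (v k)))) /\
    G (y k) <> @vzero n /\
    (if opt then step_a nrm L f G (y k) (x (S k)) (A k) (a (S k))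
     else step_b dn sh f G (y k) (x (S k)) (h (S k)) (A k) (a (S k))) /\
    A (S k) = A k + a (S k) /\
    (forall z, psi d Gd f G x0 a y (S k) (v (S k)) <= psi d Gd f G x0 a y (S k) z).

(* Main.v *)
Require Import Defs.
From mathcomp Require Import ssreflect ssrfun ssrbool eqtype ssrnat seq fintype bigop.
From Stdlib Require Import Reals Lra FunctionalExtensionality Classical.

Local Open Scope R_scope.
From HB Require Import structures.
HB.instance Definition _ := Monoid.isComLaw.Build R 0 Rplus (fun a b c => esym (Rplus_assoc a b c)) Rplus_comm Rplus_0_l.

Lemma sum_add n (F1 F2 : 'I_n -> R) :
  \big[Rplus/0]_(i < n) (F1 i + F2 i) =
  \big[Rplus/0]_(i < n) F1 i + \big[Rplus/0]_(i < n) F2 i.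
Proof.
elim: n F1 F2 => [|n IH] F1 F2; first by rewrite !big_ord0 /=; lra.
rewrite !big_ord_recr /= IH; simpl; lra.
Qed.

Lemma sum_scal n c (F : 'I_n -> R) :
  \big[Rplus/0]_(i < n) (c * F i) = c * \big[Rplus/0]_(i < n) F i.
Proof.
elim: n F => [|n IH] F; first by rewrite !big_ord0 /=; lra.
rewrite !big_ord_recr /= IH; simpl; lra.
Qed.

Lemma pairing_scal_r n (g x : vec n) c : pairing g (vscal c x) = c * pairing g x.
Proof.
rewrite /pairing -sum_scal; apply: eq_bigr => i _; rewrite /vscal; ring.
Qed.

Lemma pairing_sub_l n (g1 g2 x : vec n) :
  pairing (vsub g1 g2) x = pairing g1 x - pairing g2 x.
Proof.
have -> : pairing g1 x - pairing g2 x = pairing g1 x + (-1) * pairing g2 x by ring.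
rewrite /pairing -sum_scal -sum_add.
apply: eq_bigr => i _; rewrite /vsub; ring.
Qed.

Lemma pairing_zero_r n (g : vec n) : pairing g (@vzero n) = 0.
Proof.
have -> : @vzero n = vscal 0 (@vzero n) by apply: functional_extensionality => i; rewrite /vscal /vzero; ring.
rewrite pairing_scal_r; ring.
Qed.

Lemma dn_nonneg n (nrm dn : vec n -> R) g :
  is_norm nrm -> is_dual_norm nrm dn -> 0 <= dn g.
Proof.
move=> [_ [Hz _]] Hd.
have H0 : nrm (@vzero n) = 0 by apply/Hz.
have := proj1 (Hd g) (@vzero n); rewrite pairing_zero_r H0; apply; lra.
Qed.

Lemma pairing_le n (nrm dn : vec n -> R) g u :
  is_norm nrm -> is_dual_norm nrm dn -> pairing g u <= dn g * nrm u.
Proof.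
move=> Hn Hd.
have Hdg := @dn_nonneg n nrm dn g Hn Hd.
case: Hn => [Hp [Hz [Hs _]]].
case: (Req_dec (nrm u) 0) => Hu.
  have -> : u = @vzero n by apply/Hz.
  rewrite pairing_zero_r; have := Hp (@vzero n); nra.
have Hpos : 0 < nrm u by have := Hp u; lra.
have := proj1 (Hd g) (vscal (/ nrm u) u).
rewrite Hs pairing_scal_r Rabs_right; last by apply: Rle_ge; left; apply: Rinv_0_lt_compat.
rewrite Rinv_l //; move=> /(_ (Rle_refl _)) H.
have : pairing g u = nrm u * (/ nrm u * pairing g u) by field.
move=> ->; rewrite (Rmult_comm (dn g)); apply: Rmult_le_compat_l; lra.
Qed.

Lemma vec_ext n (p q : vec n) : (forall i, p i = q i) -> p = q.
Proof. move=> H; exact: functional_extensionality. Qed.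

Lemma phi_deriv n (nrm dn : vec n -> R) L f G (y u : vec n) t :
  is_norm nrm -> L_smooth nrm dn L f G ->
  derivable_pt_lim (fun s => f (vadd y (vscal s u))) t
    (pairing (G (vadd y (vscal t u))) u).
Proof.
move=> [Hp [_ [Hs _]]] [_ [Hg _]] eps Heps.
set M := nrm u.
have HM : 0 <= M by apply: Hp.
have He' : 0 < eps / 2 / (M + 1) by apply: Rdiv_lt_0_compat; lra.
have [del [Hdel Hd]] := Hg (vadd y (vscal t u)) _ He'.
have Hdp : 0 < del / (M + 1) by apply: Rdiv_lt_0_compat; lra.
exists (mkposreal _ Hdp) => hh Hh0 /= Hhd.
have Habs : 0 < Rabs hh by apply: Rabs_pos_lt.
have Hnh : nrm (vscal hh u) < del.
  rewrite Hs -/M.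
  have : Rabs hh * (M + 1) < del.
    have := Rmult_lt_compat_r (M + 1) _ _ ltac:(lra) Hhd.
    by rewrite /Rdiv Rmult_assoc Rinv_l; lra.
  nra.
have := Hd _ Hnh.
have -> : vadd (vadd y (vscal t u)) (vscal hh u) = vadd y (vscal (t + hh) u).
  apply: vec_ext => i; rewrite /vadd /vscal; ring.
rewrite pairing_scal_r Hs -/M.
set X := f (vadd y (vscal (t + hh) u)) - f (vadd y (vscal t u)) - hh * pairing (G (vadd y (vscal t u))) u.
move=> HX.
have -> : (f (vadd y (vscal (t + hh) u)) - f (vadd y (vscal t u))) / hh
            - pairing (G (vadd y (vscal t u))) u = X / hh.
  rewrite /X; field; lra.
rewrite /Rdiv Rabs_mult Rabs_inv.
apply: (Rmult_lt_reg_r (Rabs hh)) => //.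
rewrite /Rdiv Rmult_assoc Rinv_l; last lra.
rewrite Rmult_1_r.
apply: (Rle_lt_trans _ _ _ HX).
have : eps / 2 / (M + 1) * M < eps.
  apply: (Rmult_lt_reg_r (M + 1)); first lra.
  have -> : eps / 2 / (M + 1) * M * (M + 1) = eps / 2 * M by field; lra.
  nra.
move=> H1.
have := Rmult_lt_compat_r (Rabs hh) _ _ Habs H1. nra.
Qed.

Lemma descent n (nrm dn : vec n -> R) L f G (y z : vec n) :
  is_norm nrm -> is_dual_norm nrm dn -> L_smooth nrm dn L f G ->
  f z <= f y + pairing (G y) (vsub z y) + L / 2 * (nrm (vsub z y)) ^ 2.
Proof.
move=> Hn Hd HL.
have HL' := HL.
case: HL' => [HL0 [_ [_ HLip]]].
have Hn' := Hn; case: Hn' => [Hp [_ [Hs _]]].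
set u := vsub z y.
set c1 := pairing (G y) u.
set c2 := nrm u ^ 2.
set phi := fun s => f (vadd y (vscal s u)).
set q := plus_fct (mult_real_fct c1 id) (mult_real_fct (L / 2 * c2) (fun t => t ^ 2)).
set psi := minus_fct phi q.
set D := fun t => pairing (G (vadd y (vscal t u))) u - (c1 * 1 + L / 2 * c2 * (INR 2 * t ^ Init.Nat.pred 2)).
have Hpsi : forall t, derivable_pt_lim psi t (D t).
  move=> t; apply: derivable_pt_lim_minus.
    exact: (@phi_deriv n nrm dn L f G y u t Hn HL).
  apply: derivable_pt_lim_plus; apply: derivable_pt_lim_scal.
    exact: derivable_pt_lim_id.
  exact: derivable_pt_lim_pow.
pose pr : derivable psi := fun t => exist _ (D t) (Hpsi t).
have [c [Hc Hc01]] := MVT_cor1 psi 0 1 pr Rlt_0_1.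
have HDc : D c <= 0.
  rewrite /D /= .
  have H1 : pairing (G (vadd y (vscal c u))) u - c1
            = pairing (vsub (G (vadd y (vscal c u))) (G y)) u by rewrite pairing_sub_l.
  have H2 := @pairing_le n nrm dn (vsub (G (vadd y (vscal c u))) (G y)) u Hn Hd.
  have H3 := HLip (vadd y (vscal c u)) y.
  have E : vsub (vadd y (vscal c u)) y = vscal c u.
    by apply: vec_ext => i; rewrite /vsub /vadd /vscal; ring.
  rewrite E Hs Rabs_right in H3; last lra.
  have Hu := Hp u.
  have Hdd := @dn_nonneg n nrm dn (vsub (G (vadd y (vscal c u))) (G y)) Hn Hd.
  have : dn (vsub (G (vadd y (vscal c u))) (G y)) * nrm u <= L * (c * nrm u) * nrm u.
    by apply: Rmult_le_compat_r.
  rewrite /c2; nra.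
have Hpr : derive_pt psi c (pr c) = D c by [].
rewrite Hpr in Hc.
have E1 : psi 1 = f z - c1 - L / 2 * c2.
  rewrite /psi /minus_fct /phi /q /plus_fct /mult_real_fct /id.
  have -> : vadd y (vscal 1 u) = z by apply: vec_ext => i; rewrite /vadd /vscal /u /vsub; ring.
  ring.
have E0 : psi 0 = f y.
  rewrite /psi /minus_fct /phi /q /plus_fct /mult_real_fct /id.
  have -> : vadd y (vscal 0 u) = y by apply: vec_ext => i; rewrite /vadd /vscal; ring.
  ring.
rewrite -/u -/c1.
have : psi 1 - psi 0 <= 0 by rewrite Hc; nra.
rewrite E1 E0 /c2; lra.
Qed.

Lemma model_bound n (nrm dn : vec n -> R) (sh : vec n -> vec n) L f (g y : vec n) :
  is_norm nrm -> is_dual_norm nrm dn -> is_sharp nrm dn sh -> 0 < L ->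
  let z0 := vsub y (vscal (dn g / L) (sh g)) in
  f y + pairing g (vsub z0 y) + L / 2 * (nrm (vsub z0 y)) ^ 2
  <= f y - (dn g) ^ 2 / (2 * L).
Proof.
move=> Hn Hd Hsh HL z0.
have Hdg := @dn_nonneg n nrm dn g Hn Hd.
have Hn' := Hn; case: Hn' => [Hp [_ [Hs _]]].
have [Hs1 Hs2] := Hsh g.
set t := dn g / L.
have Ht : 0 <= t by apply: Rmult_le_pos => //; left; apply: Rinv_0_lt_compat.
have E : vsub z0 y = vscal (- t) (sh g).
  apply: vec_ext => i; rewrite /z0 /vsub /vscal /t; ring.
rewrite E pairing_scal_r Hs2 Hs Rabs_Ropp Rabs_right; last lra.
have Hsp := Hp (sh g).
have : t * nrm (sh g) <= t by nra.
have : 0 <= t * nrm (sh g) by nra.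
move=> H1 H2.
have H3 : (t * nrm (sh g)) ^ 2 <= t ^ 2 by nra.
have Et : dn g = t * L by rewrite /t; field; lra.
rewrite Et.
have -> : (t * L) ^ 2 / (2 * L) = L / 2 * t ^ 2 by field; lra.
nra.
Qed.

Lemma step_bound n (nrm dn : vec n -> R) (sh : vec n -> vec n) L f G (opt : bool)
  (yk xk1 : vec n) hk1 Ak ak1 :
  is_norm nrm -> is_dual_norm nrm dn -> is_sharp nrm dn sh -> L_smooth nrm dn L f G ->
  (if opt then step_a nrm L f G yk xk1 Ak ak1 else step_b dn sh f G yk xk1 hk1 Ak ak1) ->
  f xk1 <= f yk - (dn (G yk)) ^ 2 / (2 * L).
Proof.
move=> Hn Hd Hsh HL Hstep.
have HL0 : 0 < L by case: HL.
have Hmb := @model_bound n nrm dn sh L f (G yk) yk Hn Hd Hsh HL0.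
set z0 := vsub yk (vscal (dn (G yk) / L) (sh (G yk))) in Hmb.
case: opt Hstep => [[Hmin _]|[_ [Hmin [Hx _]]]].
  have := Hmin z0.
  have := @descent n nrm dn L f G yk xk1 Hn Hd HL.
  lra.
have Hdg := @dn_nonneg n nrm dn (G yk) Hn Hd.
have Ht : 0 <= dn (G yk) / L by apply: Rmult_le_pos => //; left; apply: Rinv_0_lt_compat.
have := Hmin _ Ht.
rewrite -Hx -/z0.
have := @descent n nrm dn L f G yk z0 Hn Hd HL.
lra.
Qed.

Theorem mainTheorem2 (n : nat) (nrm dn : vec n -> R) (sh : vec n -> vec n)
  (L : R) (f : vec n -> R) (G : vec n -> vec n) (d : vec n -> R) (Gd : vec n -> vec n)
  (xstar : vec n) (opt : bool) (x0 : vec n) (x y v : nat -> vec n)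
  (A a beta h : nat -> R) (N : nat) :
  is_norm nrm -> is_dual_norm nrm dn -> is_sharp nrm dn sh ->
  L_smooth nrm dn L f G ->
  (forall z, f xstar <= f z) ->
  is_prox nrm dn d Gd ->
  AGMsDR_run nrm dn sh L f G d Gd opt x0 x y v A a beta h N ->
  (1 <= N)%nat ->
  exists k : nat, (k <= N)%nat /\
    (dn (G (y k))) ^ 2 <= 2 * L * (f x0 - f xstar) / INR N.
Proof.
move=> Hn Hd Hsh HL Hstar _ [_ [Hx0 [_ Hrun]]] HN.
have HL0 : 0 < L by case: HL.
have HNpos : 0 < INR N by apply: lt_0_INR; apply/ltP.
set D := f x0 - f xstar.
have HD : 0 <= D by have := Hstar x0; rewrite /D; lra.
have Hstep : forall k, (k <= N)%nat -> f (x k.+1) <= f (y k) - (dn (G (y k))) ^ 2 / (2 * L).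
  move=> k Hk; have [_ [_ [Hs _]]] := Hrun k Hk.
  exact: (@step_bound n nrm dn sh L f G opt (y k) (x k.+1) (h k.+1) (A k) (a k.+1) Hn Hd Hsh HL Hs).
have Hyx : forall k, (k <= N)%nat -> f (y k) <= f (x k).
  move=> k Hk; have [[Hb [Hmin Hy]] _] := Hrun k Hk.
  rewrite Hy; have := Hmin 1 ltac:(lra).
  have -> : vadd (v k) (vscal 1 (vsub (x k) (v k))) = x k.
    by apply: vec_ext => i; rewrite /vadd /vscal /vsub; ring.
  done.
apply: NNPP => Hno.
have Hall : forall k, (k <= N)%nat -> D / INR N < (dn (G (y k))) ^ 2 / (2 * L).
  move=> k Hk.
  have Hlt : 2 * L * D / INR N < (dn (G (y k))) ^ 2.
    apply: Rnot_le_lt => Hle; apply: Hno; exists k; split => //.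
  have -> : D / INR N = (2 * L * D / INR N) / (2 * L) by field; lra.
  apply: Rmult_lt_compat_r => //; apply: Rinv_0_lt_compat; lra.
have Hind : forall k, (k <= N)%nat -> f (y k) <= f x0 - INR k * (D / INR N).
  elim => [|k IH] Hk.
    have := Hyx 0%nat Hk; rewrite Hx0 /=; lra.
  have Hk' : (k <= N)%nat by apply: leq_trans Hk; apply: leqnSn.
  have := IH Hk'; have := Hstep k Hk'; have := Hyx k.+1 Hk; have := Hall k Hk'.
  rewrite S_INR; lra.
have HNN := leqnn N.
have := Hind N HNN; have := Hstep N HNN; have := Hall N HNN; have := Hstar (x N.+1).
have -> : INR N * (D / INR N) = D by field; lra.
have : 0 <= D / INR N.
  apply: Rmult_le_pos; [exact: HD | left; apply: Rinv_0_lt_compat; exact: HNpos].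
rewrite /D; lra.
Qed.
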